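(* Let $D$ be a $3$-dicritical digraph not isomorphic to $\overleftrightarrow{K_3}$ or to $\vec{W_3}$, and let $T$ be a tree such that the bidirected tree $\overleftrightarrow{T}$ (obtained from $T$ by replacing each edge by a digon) is a subdigraph of $D$. Then the number of unordered pairs $\{u,v\}$ of distinct vertices of $T$ such that neither $uv$ nor $vu$ is an arc of $D$ is at least $\mathrm{dearth}(T)$.
   Context: Digraphs are finite, without loops or parallel arcs; a digon is a pair of arcs $uv,vu$. A $2$-dicolouring is a map to $\{1,2\}$ whose colour classes induce acyclic subdigraphs. $D$ is $3$-dicritical if $D$ has no $2$-dicolouring but every proper subdigraph has one. $\overleftrightarrow{K_3}$ has 3 vertices and all 6 arcs; $\vec{W_3}$ is a directed triangle $a\to b\to c\to a$ plus a vertex $r$ joined by a digon to each of $a,b,c$. For a tree $T$, $V_3(T)$ is the set of vertices of degree at least 3, an odd pair is a pair of non-adjacent vertices of $T$ at odd distance in $T$, $\mathrm{op}(T)$ is the number of odd pairs, and $\mathrm{dearth}(T)=\sum_{v\in V_3(T)}\frac16 d_T(v)(d_T(v)-1)+\mathrm{op}(T)$. *)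

(* Defs.v *)
From mathcomp Require Import all_boot all_order all_algebra.
Set Implicit Arguments. Unset Strict Implicit. Unset Printing Implicit Defensive.
Import GRing.Theory Num.Theory.

(* A digraph is a finite vertex type V with an arc relation a : rel V
   (no parallel arcs by construction; loops are excluded by hypothesis). *)

Definition restr (V : finType) (X : {set V}) (r : rel V) : rel V :=
  fun u v => [&& u \in X, v \in X & r u v].

Definition acyclic_on (V : finType) (X : {set V}) (r : rel V) : bool :=
  ~~ [exists x, exists y, restr X r x y && connect (restr X r) y x].

Definition two_dicolourable (V : finType) (S : {set V}) (r : rel V) : Prop :=
  exists c : V -> bool, forall b : bool, acyclic_on [set x in S | c x == b] r.

Definition subdigraph (V : finType) (a : rel V) (S : {set V}) (r : rel V) :=
  forall x y, r x y -> [&& a x y, x \in S & y \in S].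

Definition proper_sub (V : finType) (a : rel V) (S : {set V}) (r : rel V) :=
  S != setT \/ exists x y, a x y && ~~ r x y.

Definition dicritical3 (V : finType) (a : rel V) : Prop :=
  ~ two_dicolourable setT a /\
  forall (S : {set V}) (r : rel V), subdigraph a S r -> proper_sub a S r ->
    two_dicolourable S r.

Definition digraph_iso (V W : finType) (a : rel V) (b : rel W) : Prop :=
  exists f : V -> W, bijective f /\ forall x y, a x y = b (f x) (f y).

Definition K3bi : rel 'I_3 := fun i j => i != j.

(* W_3: directed triangle 0 -> 1 -> 2 -> 0, plus vertex 3 in a digon with each *)
Definition W3arc : rel 'I_4 := fun i j =>
  [|| (val i == 0) && (val j == 1), (val i == 1) && (val j == 2),
      (val i == 2) && (val j == 0), (val i == 3) && (val j != 3)
    | (val j == 3) && (val i != 3)].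

(* A tree T with vertex set VT (a subset of V) and symmetric edge relation e:
   nonempty, connected, and every edge is a bridge (minimally connected). *)
Definition is_tree (V : finType) (VT : {set V}) (e : rel V) : Prop :=
  VT != set0 /\
  (forall x y, e x y -> [&& x != y, x \in VT & y \in VT]) /\
  (forall x y, e x y = e y x) /\
  (forall x y, x \in VT -> y \in VT -> connect e x y) /\
  (forall x y, e x y ->
     ~~ connect (fun u v => e u v && ([set u; v] != [set x; y])) x y).

Definition degT (V : finType) (VT : {set V}) (e : rel V) (v : V) : nat :=
  #|[set u in VT | e v u]|.

Definition walk_len (V : finType) (e : rel V) (u v : V) (n : nat) : bool :=
  [exists t : n.-tuple V, path e u t && (last u t == v)].

(* the distance from u to v along e (length of a shortest walk, which is
   necessarily < #|V|) exists and is odd *)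
Definition odd_dist (V : finType) (e : rel V) (u v : V) : bool :=
  [exists n : 'I_#|V|, [&& odd n, walk_len e u v n &
     [forall m : 'I_n, ~~ walk_len e u v m]]].

Definition upairs (V : finType) (X : {set V}) (P : V -> V -> bool) : nat :=
  #|[set Q : {set V} | [&& #|Q| == 2, Q \subset X &
       [forall u in Q, forall v in Q, (u != v) ==> P u v]]]|.

Definition op (V : finType) (VT : {set V}) (e : rel V) : nat :=
  upairs VT (fun u v => ~~ e u v && odd_dist e u v).

Definition dearth (V : finType) (VT : {set V}) (e : rel V) : rat :=
  (\sum_(v in VT | (3 <= degT VT e v)%N)
      ((degT VT e v * (degT VT e v - 1))%N%:R / 6%:R) + (op VT e)%:R)%R.

Definition missing (V : finType) (a : rel V) (VT : {set V}) : nat :=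
  upairs VT (fun u v => ~~ a u v && ~~ a v u).

(* Main.v *)
Require Import Defs.
From mathcomp Require Import all_boot all_order all_algebra.
Set Implicit Arguments. Unset Strict Implicit. Unset Printing Implicit Defensive.

Lemma sum_bool (T : finType) (A : {set T}) (b : pred T) :
  \sum_(z in A) (b z : nat) = #|[set z in A | b z]|.
Proof.
rewrite -sum1_card.
rewrite [RHS](eq_bigl (fun z => (z \in A) && b z)); last by move=> z; rewrite inE.
by rewrite big_mkcondr; apply: eq_bigr => z _; case: (b z).
Qed.

Section Count.
Variable V : finType.
Variable N : {set V}.
Variable I : V -> V -> bool.
Hypothesis Isym : forall x y, I x y = I y x.
Hypothesis Itri : forall x y z, x \in N -> y \in N -> z \in N ->
  x != y -> y != z -> x != z -> [|| I x y, I y z | I x z].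
Hypothesis Ineq : forall x y, I x y -> x != y.

Definition dist3 (x y z : V) : bool := [&& x != y, y != z & x != z].

Lemma sum_bool_ (A : {set V}) (b : pred V) :
  \sum_(z in A) (b z : nat) = #|[set z in A | b z]|.
Proof.
rewrite -sum1_card.
rewrite [RHS](eq_bigl (fun z => (z \in A) && b z)); last by move=> z; rewrite inE.
by rewrite big_mkcondr; apply: eq_bigr => z _; case: (b z).
Qed.

Lemma cnt_z x y : x \in N -> y \in N -> x != y ->
  \sum_(z in N) (dist3 x y z : nat) = #|N| - 2.
Proof.
move=> xN yN xy; rewrite sum_bool_.
have -> : [set z in N | dist3 x y z] = N :\: [set x; y].
  apply/setP => z; rewrite !inE /dist3 xy /=.
  by rewrite (eq_sym y) (eq_sym x); case: (z \in N); case: (z == x); case: (z == y).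
rewrite cardsD (setIidPr _) ?cards2 ?xy //.
by apply/subsetP => z; rewrite !inE => /orP [] /eqP ->.
Qed.

Lemma cnt_y x : x \in N -> \sum_(y in N) (x != y : nat) = #|N| - 1.
Proof.
move=> xN; rewrite sum_bool_.
have -> : [set y in N | x != y] = N :\ x.
  by apply/setP => z; rewrite !inE andbC eq_sym.
by rewrite (cardsD1 x N) xN add1n subn1.
Qed.

Lemma dist3C x y z : dist3 y z x = dist3 x y z.
Proof. rewrite /dist3 (eq_sym z x) (eq_sym y x).
by case: (x != y); case: (y != z); case: (x != z). Qed.
Lemma dist3D x y z : dist3 x z y = dist3 x y z.
Proof. rewrite /dist3 (eq_sym z y).
by case: (x != y); case: (y != z); case: (x != z). Qed.

Definition S := \sum_(x in N) \sum_(y in N) (I x y : nat).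

Lemma T3_one : \sum_(x in N) \sum_(y in N) \sum_(z in N) (dist3 x y z : nat)
   = #|N| * (#|N| - 1) * (#|N| - 2).
Proof.
have h : #|N| = \sum_(x in N) 1 by rewrite sum1_card.
rewrite -mulnA {1}h big_distrl /=; apply: eq_bigr => x xN.
rewrite mul1n -(cnt_y xN) big_distrl /=; apply: eq_bigr => y yN.
case: (eqVneq x y) => [<-|xy].
  by rewrite big1 // => z _; rewrite /dist3 eqxx.
by rewrite cnt_z // mul1n.
Qed.

Lemma T3_xy : \sum_(x in N) \sum_(y in N) \sum_(z in N) (dist3 x y z * I x y)
   = S * (#|N| - 2).
Proof.
rewrite /S big_distrl /=; apply: eq_bigr => x xN.
rewrite big_distrl /=; apply: eq_bigr => y yN.
case Ixy: (I x y); last by rewrite big1 // => z _; rewrite muln0.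
rewrite -(cnt_z xN yN (Ineq Ixy)) mul1n.
by apply: eq_bigr => z _; rewrite muln1.
Qed.

Lemma T3_tri : #|N| * (#|N| - 1) * (#|N| - 2) <= 3 * (S * (#|N| - 2)).
Proof.
rewrite -T3_one -T3_xy.
have E2 : \sum_(x in N) \sum_(y in N) \sum_(z in N) (dist3 x y z * I y z)
   = \sum_(x in N) \sum_(y in N) \sum_(z in N) (dist3 x y z * I x y).
  rewrite exchange_big /=; apply: eq_bigr => y _.
  rewrite exchange_big /=; apply: eq_bigr => z _.
  apply: eq_bigr => x _; by rewrite [dist3 y z x]dist3C.
have E3 : \sum_(x in N) \sum_(y in N) \sum_(z in N) (dist3 x y z * I x z)
   = \sum_(x in N) \sum_(y in N) \sum_(z in N) (dist3 x y z * I x y).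
  apply: eq_bigr => x _; rewrite exchange_big /=; apply: eq_bigr => y _.
  apply: eq_bigr => z _; by rewrite [dist3 x z y]dist3D.
set T := \sum_(x in N) \sum_(y in N) \sum_(z in N) (dist3 x y z * I x y).
have split3 : \sum_(x in N) \sum_(y in N) \sum_(z in N)
    (dist3 x y z * (I x y + I y z + I x z)) = T + T + T.
  rewrite /T -{2}E2 -{2}E3.
  rewrite -!big_split /=; apply: eq_bigr => x _.
  rewrite -!big_split /=; apply: eq_bigr => y _.
  rewrite -!big_split /=; apply: eq_bigr => z _.
  by rewrite !mulnDr.
have -> : 3 * T = T + T + T by rewrite !mulSn mul0n addn0 addnA.
rewrite -split3.
apply: leq_sum => x xN; apply: leq_sum => y yN; apply: leq_sum => z zN.
case d: (dist3 x y z) => //=; rewrite !mul1n.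
move: d; rewrite /dist3 => /and3P [a b c].
by have := Itri xN yN zN a b c; case: (I x y); case: (I y z); case: (I x z).
Qed.
Lemma tri_bound : 3 <= #|N| -> #|N| * (#|N| - 1) <= 3 * S.
Proof.
move=> h; have := T3_tri; rewrite mulnA leq_pmul2r //.
by rewrite subn_gt0.
Qed.
End Count.

Section Pairs.
Variable V : finType.
Variable N : {set V}.
Variable J : V -> V -> bool.
Hypothesis Jsym : forall x y, J x y = J y x.

Definition Pset := [set Q : {set V} | [&& #|Q| == 2, Q \subset N &
       [forall u in Q, forall v in Q, (u != v) ==> J u v]]].

Lemma sum_eq1 (T : finType) (A : {set T}) (R : T) :
  \sum_(Q in A) (Q == R : nat) = (R \in A).
Proof.
rewrite sum_bool; case: (boolP (R \in A)) => h.
  rewrite (_ : [set Q in A | Q == R] = [set R]) ?cards1 //.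
  by apply/setP => Q; rewrite !inE; case: eqP => [->|_]; rewrite ?andbF ?h.
rewrite (_ : [set Q in A | Q == R] = set0) ?cards0 //.
by apply/setP => Q; rewrite !inE; case: eqP => [->|_]; rewrite ?andbF ?(negbTE h).
Qed.

Lemma pairs_count :
  \sum_(x in N) \sum_(y in N) ((x != y) && J x y : nat) = 2 * #|Pset|.
Proof.
have step1 : forall x y, x \in N -> y \in N ->
   ((x != y) && J x y : nat) = \sum_(Q in Pset) ((x != y) && (Q == [set x; y]) : nat).
  move=> x y xN yN; case: (eqVneq x y) => [->|xy] /=.
    by rewrite big1.
  rewrite sum_eq1; congr nat_of_bool; rewrite inE cards2 xy /=.
  have -> : [set x; y] \subset N.
    by apply/subsetP => z; rewrite !inE => /orP [] /eqP ->.
  apply/idP/idP => [Jxy|].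
    apply/forallP => u; apply/implyP => uin; apply/forallP => v; apply/implyP => vin.
    apply/implyP => uv; move: uin vin uv; rewrite !inE.
    by case/orP => /eqP -> /orP [] /eqP ->; rewrite ?eqxx // Jsym.
  move/forallP => /(_ x); rewrite !inE eqxx /= => /forallP /(_ y).
  by rewrite !inE eqxx orbT xy.
rewrite (eq_bigr (fun x => \sum_(y in N) \sum_(Q in Pset)
      ((x != y) && (Q == [set x; y]) : nat))); last first.
  by move=> x xN; apply: eq_bigr => y yN; rewrite step1.
under eq_bigr => x _ do rewrite exchange_big.
rewrite exchange_big /= mulnC -sum_nat_const.
apply: eq_bigr => Q; rewrite inE => /and3P [Q2 QN _].
have pw : forall x y, ((x != y) && (Q == [set x; y]) : nat) =
    ((x \in Q) && ((y \in Q) && (x != y)) : nat).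
  move=> x y; congr nat_of_bool.
  case: (eqVneq x y) => [->|xy] /=; first by rewrite !andbF.
  rewrite andbT; apply/idP/idP => [/eqP ->|/andP [xQ yQ]]; first by rewrite !inE !eqxx orbT.
  rewrite eq_sym eqEcard (eqP Q2) cards2 xy leqnn andbT.
  by apply/subsetP => z; rewrite !inE => /orP [] /eqP ->.
under eq_bigr => x _ do under eq_bigr => y _ do rewrite pw.
have inner : forall x, x \in N ->
   \sum_(y in N) ((x \in Q) && ((y \in Q) && (x != y)) : nat) = (x \in Q).
  move=> x xN; case: (boolP (x \in Q)) => xQ /=; last by rewrite big1.
  rewrite sum_bool (_ : [set y in N | (y \in Q) && (x != y)] = Q :\ x).
    by move: (cardsD1 x Q); rewrite xQ (eqP Q2) add1n => -[<-].
  apply/setP => z; rewrite !inE andbC eq_sym.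
  case: (boolP (z \in Q)) => zQ; rewrite ?andbF //= (subsetP QN) ?andbT //.
rewrite (eq_bigr _ inner) sum_bool (_ : [set x in N | x \in Q] = Q) ?(eqP Q2) //.
by apply/setP => z; rewrite inE; case: (boolP (z \in Q)) => zQ; rewrite ?andbF ?andbT // (subsetP QN).
Qed.
End Pairs.

Lemma cyc2 (V : finType) (X : {set V}) (r : rel V) x y :
  x \in X -> y \in X -> r x y -> r y x -> ~~ acyclic_on X r.
Proof.
move=> xX yX rxy ryx; rewrite /acyclic_on negbK; apply/existsP; exists x.
apply/existsP; exists y; rewrite /restr xX yX rxy /=.
by apply: connect1; rewrite /restr yX xX ryx.
Qed.

Lemma cyc3 (V : finType) (X : {set V}) (r : rel V) x y z :
  x \in X -> y \in X -> z \in X -> r x y -> r y z -> r z x -> ~~ acyclic_on X r.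
Proof.
move=> xX yX zX rxy ryz rzx; rewrite /acyclic_on negbK; apply/existsP; exists x.
apply/existsP; exists y; rewrite /restr xX yX rxy /=.
apply: (connect_trans (y:=z)); apply: connect1; by rewrite /restr ?xX ?yX ?zX.
Qed.

Lemma connect_first (V : finType) (r : rel V) x y :
  x != y -> connect r x y -> exists2 z, r x z & connect r z y.
Proof.
move=> xy /connectP [[|z t]] /=; first by move=> _ h; rewrite h eqxx in xy.
move=> /andP [rxz pt] ly; exists z => //; apply/connectP; by exists t.
Qed.

Section Digraph.
Variable V : finType.
Variable a : rel V.
Hypothesis noloop : forall x, ~~ a x x.
Hypothesis dicrit : dicritical3 a.

Definition cls (c : V -> bool) (b : bool) : {set V} := [set x in setT | c x == b].

Lemma col_not (r : rel V) (c : V -> bool) :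
  (forall b, acyclic_on (cls c b) r) -> forall u w, r u w -> r w u -> c u != c w.
Proof.
move=> Hc u w ruw rwu; apply/negP => /eqP e.
have := Hc (c u); apply/negP; apply: (@cyc2 _ _ _ u w) => //; by rewrite !inE ?e ?eqxx.
Qed.

Lemma extend (r : rel V) (c : V -> bool) :
  (forall b, acyclic_on (cls c b) r) ->
  (forall b x y, x \in cls c b -> y \in cls c b -> a x y -> connect (restr (cls c b) r) x y) ->
  False.
Proof.
move=> Hc Hext; case: dicrit => nd _; apply: nd; exists c => b.
apply/negP => /existsP [x /existsP [y /andP [rxy cyx]]].
have sub : subrel (restr (cls c b) a) (connect (restr (cls c b) r)).
  by move=> u w /and3P [uX wX auw]; apply: Hext.
have cyx' := connect_sub sub cyx.
move: rxy => /and3P [xX yX axy].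
have cxy := Hext _ _ _ xX yX axy.
have xy : x != y by apply/eqP => exy; move: axy; rewrite exy (negbTE (noloop y)).
have [z rxz czy] := connect_first xy cxy.
have := Hc b; apply/negP; rewrite /acyclic_on negbK; apply/existsP; exists x.
apply/existsP; exists z; rewrite rxz /=.
exact: connect_trans czy cyx'.
Qed.

Definition remarc (p0 q0 : V) : rel V := fun x y => a x y && ((x, y) != (p0, q0)).

Lemma removal p0 q0 : a p0 q0 ->
  (forall c, (forall b, acyclic_on (cls c b) (remarc p0 q0)) -> c p0 = c q0 ->
     connect (restr (cls c (c p0)) (remarc p0 q0)) p0 q0) -> False.
Proof.
move=> apq H; case: dicrit => _ sub.
have [c Hc] : two_dicolourable setT (remarc p0 q0).
  apply: sub.
    by move=> x y /andP [axy _]; rewrite axy !inE.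
  by rewrite /proper_sub; right; exists p0, q0; rewrite apq /remarc eqxx andbF.
have Hc' : forall b, acyclic_on (cls c b) (remarc p0 q0) by [].
apply: (extend Hc') => b x y xX yX axy.
case: (eqVneq (x, y) (p0, q0)) => [[ex ey]|ne].
  subst x y; move: xX yX; rewrite !inE => /eqP e1 /eqP e2.
  rewrite -e1; apply: H => //; by rewrite e1 e2.
by apply: connect1; rewrite /restr xX yX /remarc axy ne.
Qed.

Lemma whole (S : {set V}) (r : rel V) :
  subdigraph a S r -> ~ two_dicolourable S r ->
  S = setT /\ forall x y, a x y -> r x y.
Proof.
move=> sr nd; case: dicrit => _ sub.
have np : ~ Defs.proper_sub a S r by move=> h; apply: nd; apply: sub.
split.
  by case: (eqVneq S setT) => // h; exfalso; apply: np; left.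
move=> x y axy; apply/negPn/negP => nr; apply: np; right; exists x, y.
by rewrite axy nr.
Qed.


Definition o30 : 'I_3 := @Ordinal 3 0 isT.
Definition o31 : 'I_3 := @Ordinal 3 1 isT.
Definition o32 : 'I_3 := @Ordinal 3 2 isT.

Lemma K3_case (v p q x : V) : x \in [set v; p; q] -> x = v \/ x = p \/ x = q.
Proof. by rewrite !inE => /orP [/orP [] | ] /eqP ->; auto. Qed.

Lemma K3_iso (v p q : V) : v != p -> v != q -> p != q ->
  a v p -> a p v -> a v q -> a q v -> a p q -> a q p -> digraph_iso a K3bi.
Proof.
move=> vp vq pq avp apv avq aqv apq aqp.
pose f x := if x == v then o30 else if x == p then o31 else o32.
pose g (i : 'I_3) := if val i == 0 then v else if val i == 1 then p else q.
have fv : f v = o30 by rewrite /f eqxx.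
have fp : f p = o31 by rewrite /f eq_sym (negbTE vp) eqxx.
have fq : f q = o32 by rewrite /f eq_sym (negbTE vq) eq_sym (negbTE pq).
pose S := [set v; p; q].
pose r x y := [&& K3bi (f x) (f y), x \in S & y \in S].
have sd : subdigraph a S r.
  move=> x y /and3P [h xS yS]; rewrite xS yS !andbT; move: h.
  by case: (K3_case xS) => [->|[->|->]]; case: (K3_case yS) => [->|[->|->]];
    rewrite ?fv ?fp ?fq.
have nd : ~ two_dicolourable S r.
  move=> [c Hc].
  have memc : forall x b, x \in S -> c x == b -> x \in [set y in S | c y == b].
    by move=> x b xS cb; rewrite inE xS cb.
  have vS : v \in S by rewrite !inE eqxx.
  have pS : p \in S by rewrite !inE eqxx orbT.
  have qS : q \in S by rewrite !inE eqxx !orbT.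
  case e1: (c v == c p).
    by move: (Hc (c v)); apply/negP; apply: (@cyc2 _ _ _ v p);
      rewrite ?memc // ?eqxx 1?eq_sym // /r fv fp vS pS.
  case e2: (c v == c q).
    by move: (Hc (c v)); apply/negP; apply: (@cyc2 _ _ _ v q);
      rewrite ?memc // ?eqxx 1?eq_sym // /r fv fq vS qS.
  have e3 : c p == c q by move: e1 e2; case: (c v); case: (c p); case: (c q).
  by move: (Hc (c p)); apply/negP; apply: (@cyc2 _ _ _ p q);
    rewrite ?memc // ?eqxx 1?eq_sym // /r fp fq pS qS.
have [ST ar] := whole sd nd.
have cases : forall x, x = v \/ x = p \/ x = q.
  by move=> x; apply: K3_case; rewrite -/S ST inE.
exists f; split.
  exists g.
    by move=> x; case: (cases x) => [->|[->|->]]; rewrite ?fv ?fp ?fq.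
  move=> [[|[|[|n]]] Hi] //; apply/val_inj; by rewrite /g /= ?fv ?fp ?fq.
move=> x y; apply/idP/idP => [/ar /and3P [] //|h].
have := sd x y; rewrite /r h -/S ST !inE /= => /(_ isT) /andP [] //.
Qed.


Definition o40 : 'I_4 := @Ordinal 4 0 isT.
Definition o41 : 'I_4 := @Ordinal 4 1 isT.
Definition o42 : 'I_4 := @Ordinal 4 2 isT.
Definition o43 : 'I_4 := @Ordinal 4 3 isT.

Lemma W3_case (v p q s x : V) : x \in [set v; p; q; s] ->
  x = v \/ x = p \/ x = q \/ x = s.
Proof. by rewrite !inE => /orP [/orP [/orP [] | ] | ] /eqP ->; auto. Qed.

Lemma W3_iso (v p q s : V) : v != p -> v != q -> v != s -> p != q -> q != s -> p != s ->
  a v p -> a p v -> a v q -> a q v -> a v s -> a s v ->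
  a p q -> a q s -> a s p -> digraph_iso a W3arc.
Proof.
move=> vp vq vs pq qs ps avp apv avq aqv avs asv apq aqs asp.
pose f x := if x == v then o43 else if x == p then o40 else if x == q then o41 else o42.
pose g (i : 'I_4) := if val i == 0 then p else if val i == 1 then q
   else if val i == 2 then s else v.
have fv : f v = o43 by rewrite /f eqxx.
have fp : f p = o40 by rewrite /f eq_sym (negbTE vp) eqxx.
have fq : f q = o41 by rewrite /f eq_sym (negbTE vq) eq_sym (negbTE pq) eqxx.
have fs : f s = o42
  by rewrite /f eq_sym (negbTE vs) eq_sym (negbTE ps) eq_sym (negbTE qs).
pose S := [set v; p; q; s].
pose r x y := [&& W3arc (f x) (f y), x \in S & y \in S].
have sd : subdigraph a S r.
  move=> x y /and3P [h xS yS]; rewrite xS yS !andbT; move: h.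
  by case: (W3_case xS) => [->|[->|[->|->]]]; case: (W3_case yS) => [->|[->|[->|->]]];
    rewrite ?fv ?fp ?fq ?fs.
have nd : ~ two_dicolourable S r.
  move=> [c Hc].
  have memc : forall x b, x \in S -> c x == b -> x \in [set y in S | c y == b].
    by move=> x b xS cb; rewrite inE xS cb.
  have vS : v \in S by rewrite !inE eqxx.
  have pS : p \in S by rewrite !inE eqxx ?orbT.
  have qS : q \in S by rewrite !inE eqxx ?orbT.
  have sS : s \in S by rewrite !inE eqxx ?orbT.
  case e1: (c v == c p).
    by move: (Hc (c v)); apply/negP; apply: (@cyc2 _ _ _ v p);
      rewrite ?memc // ?eqxx 1?eq_sym // /r fv fp vS pS.
  case e2: (c v == c q).
    by move: (Hc (c v)); apply/negP; apply: (@cyc2 _ _ _ v q);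
      rewrite ?memc // ?eqxx 1?eq_sym // /r fv fq vS qS.
  case e3: (c v == c s).
    by move: (Hc (c v)); apply/negP; apply: (@cyc2 _ _ _ v s);
      rewrite ?memc // ?eqxx 1?eq_sym // /r fv fs vS sS.
  have e4 : c p == c q by move: e1 e2; case: (c v); case: (c p); case: (c q).
  have e5 : c p == c s by move: e1 e3; case: (c v); case: (c p); case: (c s).
  move: (Hc (c p)); apply/negP; apply: (@cyc3 _ _ _ p q s).
  - exact: (memc _ _ pS (eqxx _)).
  - by apply: (memc _ _ qS); rewrite eq_sym.
  - by apply: (memc _ _ sS); rewrite eq_sym.
  - by rewrite /r fp fq pS qS.
  - by rewrite /r fq fs qS sS.
  - by rewrite /r fs fp sS pS.
have [ST ar] := whole sd nd.
have cases : forall x, x = v \/ x = p \/ x = q \/ x = s.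
  by move=> x; apply: W3_case; rewrite -/S ST inE.
exists f; split.
  exists g.
    by move=> x; case: (cases x) => [->|[->|[->|->]]]; rewrite ?fv ?fp ?fq ?fs.
  move=> [[|[|[|[|n]]]] Hi] //; apply/val_inj; by rewrite /g /= ?fv ?fp ?fq ?fs.
move=> x y; apply/idP/idP => [/ar /and3P [] //|h].
have := sd x y; rewrite /r h -/S ST !inE /= => /(_ isT) /andP [] //.
Qed.

End Digraph.

Import GRing.Theory Num.Theory.

Lemma pair_neq (T : eqType) (x y p q : T) : (x != p) || (y != q) -> (x, y) != (p, q).
Proof. by case/orP => h; apply/eqP => -[e1 e2]; rewrite ?e1 ?e2 eqxx in h. Qed.

Ltac kill := match goal with H : is_true (?x != ?x) |- _ => exfalso; move: H; rewrite eqxx; by [] end.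

Section Tree.
Variable V : finType.
Variable a : rel V.
Hypothesis noloop : forall x, ~~ a x x.
Hypothesis dicrit : dicritical3 a.
Hypothesis nK3 : ~ digraph_iso a K3bi.
Hypothesis nW3 : ~ digraph_iso a W3arc.
Variable VT : {set V}.
Variable e : rel V.
Hypothesis eVT : forall x y, e x y -> [&& x != y, x \in VT & y \in VT].
Hypothesis esym : forall x y, e x y = e y x.
Hypothesis bridge : forall x y, e x y ->
     ~~ connect (fun u v => e u v && ([set u; v] != [set x; y])) x y.
Hypothesis ea : forall x y, e x y -> a x y.

Lemma e_neq x y : e x y -> x != y.
Proof. by move/eVT => /and3P []. Qed.

Lemma ea' x y : e x y -> a y x.
Proof. by rewrite esym; apply: ea. Qed.

Lemma no_digon v p q : e v p -> e v q -> p != q -> a p q -> a q p -> False.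
Proof.
move=> evp evq pq apq aqp; apply: nK3.
apply: (@K3_iso _ a dicrit v p q) => //; try exact: e_neq;
  by [apply: ea | apply: ea'].
Qed.

Lemma no_cyc v p q s : e v p -> e v q -> e v s -> p != q -> q != s -> p != s ->
  a p q -> a q s -> a s p -> False.
Proof.
move=> evp evq evs pq qs ps apq aqs asp; apply: nW3.
apply: (@W3_iso _ a dicrit v p q s) => //; try exact: e_neq;
  by [apply: ea | apply: ea'].
Qed.

Lemma no_trans v p q s : e v p -> e v q -> e v s -> p != q -> q != s -> p != s ->
  a p q -> a q s -> a p s -> False.
Proof.
move=> evp evq evs pq qs ps apq aqs aps.
apply: (removal noloop dicrit aps) => c Hc cps.
have avp := ea evp; have apv := ea' evp; have avq := ea evq; have aqv := ea' evq.
have vp := e_neq evp; have vq := e_neq evq; have vs := e_neq evs.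
have cvp : c v != c p.
  apply: (col_not Hc); rewrite /remarc ?avp ?apv //=; apply/eqP; move=> E; have /= e1 := congr1 fst E; have /= e2 := congr1 snd E; subst; kill.
have cvq : c v != c q.
  apply: (col_not Hc); rewrite /remarc ?avq ?aqv //=; apply/eqP; move=> E; have /= e1 := congr1 fst E; have /= e2 := congr1 snd E; subst; kill.
have cpq : c q = c p by move: cvp cvq; case: (c v); case: (c p); case: (c q).
apply: (connect_trans (y := q)); apply: connect1;
  rewrite /restr !inE ?cpq -?cps ?eqxx /remarc ?apq ?aqs //=; apply/eqP; move=> E; have /= e1 := congr1 fst E; have /= e2 := congr1 snd E; subst; kill.
Qed.


Definition Ia (x y : V) : bool := (x != y) && (~~ a x y && ~~ a y x).

Ltac tri_solve v p q s :=
  solve [ by []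
  | exfalso; first
    [ eapply (@no_digon v p q); eassumption
    | eapply (@no_digon v q s); eassumption
    | eapply (@no_digon v p s); eassumption
    | eapply (@no_cyc v p q s); eassumption
    | eapply (@no_cyc v p s q); eassumption
    | eapply (@no_trans v p q s); eassumption
    | eapply (@no_trans v p s q); eassumption
    | eapply (@no_trans v q p s); eassumption
    | eapply (@no_trans v q s p); eassumption
    | eapply (@no_trans v s p q); eassumption
    | eapply (@no_trans v s q p); eassumption ] ].

Lemma tri v p q s : e v p -> e v q -> e v s -> p != q -> q != s -> p != s ->
  [|| Ia p q, Ia q s | Ia p s].
Proof.
move=> evp evq evs pq qs ps.
have qp : q != p by rewrite eq_sym.
have sq : s != q by rewrite eq_sym.
have sp : s != p by rewrite eq_sym.
rewrite /Ia pq qs ps /=.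
case H1: (a p q); case H2: (a q p); case H3: (a q s); case H4: (a s q);
  case H5: (a p s); case H6: (a s p); tri_solve v p q s.
Qed.

Lemma parity (r : rel V) (c : V -> bool) : (forall b, acyclic_on (cls c b) r) ->
  (forall x y, e x y -> r x y) ->
  forall t u, path e u t -> c (last u t) = odd (size t) (+) c u.
Proof.
move=> Hc er; elim=> [|w t IH] u /=; first by case: (c u).
move=> /andP [euw pt]; rewrite IH //.
have : c u != c w by apply: (col_not Hc); apply: er; rewrite // esym.
by case: (c u); case: (c w); case: (odd (size t)).
Qed.

Lemma odd_pair x y : ~~ e x y -> odd_dist e x y -> ~~ a x y.
Proof.
move=> nexy /existsP [n /and3P [on /existsP [t /andP [pt lt]] _]].
apply/negP => axy; apply: (removal noloop dicrit axy) => c Hc cxy; exfalso.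
have er : forall u w, e u w -> remarc a x y u w.
  move=> u w euw; rewrite /remarc ea //=; apply/eqP => E.
  have /= e1 := congr1 fst E; have /= e2 := congr1 snd E; subst.
  by rewrite euw in nexy.
have := parity Hc er pt; rewrite (eqP lt) size_tuple on -cxy.
by case: (c x).
Qed.

Lemma dist2 v x y : e v x -> e v y -> ~~ (~~ e x y && odd_dist e x y).
Proof.
move=> evx evy; apply/negP => /andP [nexy /existsP [[n Hn] /and3P [/= on wn mn]]].
have w2 : walk_len e x y 2.
  apply/existsP; exists [tuple v; y]; rewrite /= eqxx evy andbT andbT.
  by rewrite esym evx.
move: Hn on wn mn; case: n => [|[|[|n]]] //= Hn _.
  move=> /existsP [t /andP []]; case: t => [[|z [|? ?]] //= _].
  by rewrite andbT => ezx /eqP ezy; rewrite -ezy ezx in nexy.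
move=> _ /forallP /(_ (@Ordinal n.+3 2 isT)) /=.
by rewrite w2.
Qed.

Lemma setneq (u w x v : V) : u \notin [set x; v] -> [set u; w] != [set x; v].
Proof. by apply: contra => /eqP <-; rewrite !inE eqxx. Qed.

Lemma unique_center v w x y : e v x -> e v y -> e w x -> e w y -> x != y -> v != w -> False.
Proof.
move=> evx evy ewx ewy xy vw.
have exv : e x v by rewrite esym.
have := bridge exv; apply/negP; rewrite negbK.
have wx := e_neq ewx; have vy := e_neq evy; have vx := e_neq evx.
apply: (connect_trans (y := w)).
  apply: connect1; rewrite /= esym ewx /= setUC.
  by apply: setneq; rewrite !inE negb_or wx eq_sym vw.
apply: (connect_trans (y := y)).
  apply: connect1; rewrite /= ewy /=.
  by apply: setneq; rewrite !inE negb_or wx eq_sym vw.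
apply: connect1; rewrite /= esym evy /=.
by apply: setneq; rewrite !inE negb_or eq_sym xy eq_sym vy.
Qed.


Definition Nb v := [set u in VT | e v u].
Definition Jm (x y : V) : bool := ~~ a x y && ~~ a y x.
Definition Jo (x y : V) : bool := ~~ e x y && odd_dist e x y.

Lemma Nb_e v u : u \in Nb v -> e v u.
Proof. by rewrite inE => /andP []. Qed.

Lemma per_vertex v : 3 <= #|Nb v| -> #|Nb v| * (#|Nb v| - 1) <= 6 * #|Pset (Nb v) Jm|.
Proof.
move=> h3.
have Itri : forall x y z, x \in Nb v -> y \in Nb v -> z \in Nb v ->
   x != y -> y != z -> x != z -> [|| Ia x y, Ia y z | Ia x z].
  move=> x y z xN yN zN xy yz xz.
  exact: (tri (Nb_e xN) (Nb_e yN) (Nb_e zN) xy yz xz).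
have Ineq : forall x y, Ia x y -> x != y by move=> x y /andP [].
have := tri_bound Itri Ineq h3.
have Jsym : forall x y, Jm x y = Jm y x by move=> x y; rewrite /Jm andbC.
rewrite (_ : 6 = 3 * 2) // -mulnA -(pairs_count (Nb v) Jsym).
by [].
Qed.

Lemma Pset_two (N : {set V}) (J : V -> V -> bool) Q : Q \in Pset N J ->
  exists x y, [/\ x != y, Q = [set x; y], x \in N, y \in N & J x y].
Proof.
rewrite inE => /and3P [/cards2P [x [y [xy EQ]]] QN /forallP H].
exists x, y; split => //.
- by apply: (subsetP QN); rewrite EQ !inE eqxx.
- by apply: (subsetP QN); rewrite EQ !inE eqxx orbT.
have /implyP := H x; rewrite EQ !inE eqxx /= => /(_ isT) /forallP /(_ y).
by rewrite !inE eqxx orbT xy.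
Qed.

Lemma Pset_all (N : {set V}) (J : V -> V -> bool) Q u w : Q \in Pset N J ->
  u \in Q -> w \in Q -> u != w -> J u w.
Proof.
rewrite inE => /and3P [_ _ /forallP H] uQ wQ uw.
by have /implyP /(_ uQ) /forallP /(_ w) /implyP /(_ wQ) /implyP /(_ uw) := H u.
Qed.

Lemma Pset_sub (N : {set V}) (J : V -> V -> bool) Q : Q \in Pset N J -> Q \subset N.
Proof. by rewrite inE => /and3P []. Qed.

Lemma count_main :
  \sum_(v in VT | 3 <= degT VT e v) #|Pset (Nb v) Jm| + #|Pset VT Jo| <= #|Pset VT Jm|.
Proof.
set M := Pset VT Jm; set O := Pset VT Jo.
have PvM : forall v, Pset (Nb v) Jm \subset M.
  move=> v; apply/subsetP => Q; rewrite !inE => /and3P [-> QN ->]; rewrite andbT /=.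
  by apply: (subset_trans QN); apply/subsetP => u; rewrite inE => /andP [].
have OM : O \subset M.
  apply/subsetP => Q; rewrite !inE => /and3P [-> -> /forallP H] /=.
  apply/forallP => u; apply/implyP => uQ; apply/forallP => w; apply/implyP => wQ.
  apply/implyP => uw.
  have /implyP /(_ uQ) /forallP /(_ w) /implyP /(_ wQ) /implyP /(_ uw) := H u.
  move=> /andP [n1 o1].
  have /implyP /(_ wQ) /forallP /(_ u) /implyP /(_ uQ) /implyP := H w.
  rewrite eq_sym => /(_ uw) /andP [n2 o2].
  by rewrite /Jm (odd_pair n1 o1) (odd_pair n2 o2).
have disj : forall Q v, Q \in Pset (Nb v) Jm -> Q \notin O.
  move=> Q v /Pset_two [x [y [xy EQ xN yN _]]]; apply/negP => QO.
  have := dist2 (Nb_e xN) (Nb_e yN); apply/negP; rewrite negbK.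
  by apply: (Pset_all QO); rewrite // EQ !inE eqxx ?orbT.
have uniq : forall Q v w, Q \in Pset (Nb v) Jm -> Q \in Pset (Nb w) Jm -> v = w.
  move=> Q v w /Pset_two [x [y [xy EQ xN yN _]]] Qw.
  case: (eqVneq v w) => // vw; exfalso.
  have xw : x \in Nb w by apply: (subsetP (Pset_sub Qw)); rewrite EQ !inE eqxx.
  have yw : y \in Nb w by apply: (subsetP (Pset_sub Qw)); rewrite EQ !inE eqxx orbT.
  exact: (unique_center (Nb_e xN) (Nb_e yN) (Nb_e xw) (Nb_e yw) xy vw).
have E1 : forall v, #|Pset (Nb v) Jm| = \sum_(Q in M) (Q \in Pset (Nb v) Jm : nat).
  move=> v; rewrite sum_bool; apply: eq_card => Q; rewrite [in RHS]inE.
  by case: (boolP (Q \in Pset (Nb v) Jm)) => h; rewrite ?andbF ?andbT ?(subsetP (PvM v)).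
have E2 : #|O| = \sum_(Q in M) (Q \in O : nat).
  rewrite sum_bool; apply: eq_card => Q; rewrite [in RHS]inE.
  by case: (boolP (Q \in O)) => h; rewrite ?andbF ?andbT ?(subsetP OM).
rewrite (eq_bigr _ (fun v _ => E1 v)) E2 exchange_big /= -big_split /=.
rewrite -sum1_card; apply: leq_sum => Q _.
case: (pickP (fun v => (v \in VT) && (3 <= degT VT e v) && (Q \in Pset (Nb v) Jm))).
  move=> v0 /andP [c0 Qv0]; rewrite (bigD1 v0) //= Qv0 big1.
    by rewrite (negbTE (disj _ _ Qv0)).
  move=> w /andP [_ wv0]; case Qw: (Q \in Pset (Nb w) Jm) => //.
  by rewrite (uniq _ _ _ Qv0 Qw) eqxx in wv0.
move=> none; rewrite big1 ?add0n ?leq_b1 // => w cw.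
by have := none w; rewrite cw /= => ->.
Qed.

Theorem main_ineq : (dearth VT e <= (missing a VT)%:R)%R.
Proof.
rewrite /dearth.
apply: (Order.POrderTheory.le_trans (y := ((\sum_(v in VT | 3 <= degT VT e v) #|Pset (Nb v) Jm| + #|Pset VT Jo|)%N%:R)%R)).
  rewrite natrD natr_sum; apply: lerD => //.
  apply: ler_sum => v /andP [vVT d3].
  rewrite ler_pdivrMr ?ltr0n // -natrM ler_nat [X in _ <= X]mulnC.
  exact: (per_vertex d3).
by rewrite ler_nat; apply: count_main.
Qed.

End Tree.

Theorem lemma30 (V : finType) (a : rel V) (VT : {set V}) (e : rel V) :
  (forall x, ~~ a x x) ->
  dicritical3 a ->
  ~ digraph_iso a K3bi ->
  ~ digraph_iso a W3arc ->
  is_tree VT e ->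
  (forall x y, e x y -> a x y) ->
  (dearth VT e <= (missing a VT)%:R)%R.
Proof.
move=> noloop dicrit nK3 nW3 [_ [eVT [esym [_ bridge]]]] ea.
exact: (main_ineq noloop dicrit nK3 nW3 eVT esym bridge ea).
Qed.
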